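(* Let $G$ be a $\lambda$-graph, $B$ a bisimulation on the nodes of $G$, and $Q$ a query over $G$ with $Q\subseteq B$. Then $Q^{\Downarrow}$ is a bisimulation.
   Context: A pre-$\lambda$-graph is a directed graph whose nodes are of four kinds: an application node $@(n_1,n_2)$ has exactly two children, its left child $n_1$ and its right child $n_2$; an abstraction node $\lambda(n)$ has exactly one child, its body $n$; a free variable node has no children and carries an atom $\mathrm{id}(n)$ from a fixed set of atoms, distinct free variable nodes carrying distinct atoms; a bound variable node $\mathrm{var}(l)$ has exactly one outgoing binding edge, to an abstraction node $l$ (its binder). A trace is a finite sequence of directions from $\{\swarrow,\downarrow,\searrow\}$; $\epsilon$ is the empty trace and $d\cdot\tau$ is the trace $\tau$ extended by one final step $d$. Paths $n\xrightarrow{\tau}m$ are defined inductively: $n\xrightarrow{\epsilon}n$; if $n\xrightarrow{\tau}\lambda(m)$ then $n\xrightarrow{\downarrow\cdot\tau}m$; if $n\xrightarrow{\tau}@(m_1,m_2)$ then $n\xrightarrow{\swarrow\cdot\tau}m_1$ and $n\xrightarrow{\searrow\cdot\tau}m_2$ (binding edges are never followed). The path $n\xrightarrow{\tau}$ crosses a node $m$ if either $n\xrightarrow{\tau}m$, or $\tau=d\cdot\tau'$ and $n\xrightarrow{\tau'}$ crosses $m$. A root is a node $r$ such that the only path ending in $r$ has the empty trace. A node $m$ dominates $n$ if every path from a root to $n$ crosses $m$. A $\lambda$-graph is a pre-$\lambda$-graph that has finitely many nodes, is acyclic ($n\xrightarrow{\tau}n$ holds only for $\tau=\epsilon$), and is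 dominated (every bound variable node $\mathrm{var}(l)$ is dominated by its binder $l$). Two nodes are homogeneous if both are application nodes, or both abstraction nodes, or both free variable nodes, or both bound variable nodes; a binary relation $R$ on nodes is homogeneous if it only relates homogeneous nodes. Rules: $(\swarrow)$: $@(n_1,n_2)\,R\,@(m_1,m_2)$ implies $n_1\,R\,m_1$; $(\searrow)$: $@(n_1,n_2)\,R\,@(m_1,m_2)$ implies $n_2\,R\,m_2$; $(\downarrow)$: $\lambda(n)\,R\,\lambda(m)$ implies $n\,R\,m$; $(\circlearrowright)$: $\mathrm{var}(n)\,R\,\mathrm{var}(m)$ implies $n\,R\,m$. $R$ is propagated if closed under $(\swarrow),(\downarrow),(\searrow)$. A bisimulation is a homogeneous propagated relation closed also under $(\circlearrowright)$. $R^{\Downarrow}$ (propagation) is the smallest propagated relation containing $R$. A query over $G$ is a binary relation on the roots of $G$. *)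

(* Defs.v *)
From Stdlib Require Import List.
Import ListNotations.
Set Implicit Arguments.

Inductive node (V A : Type) : Type :=
| App  : V -> V -> node V A
| Abs  : V -> node V A
| FVar : A -> node V A
| BVar : V -> node V A.          (* var(l), binding edge to l *)

Arguments App {V A}. Arguments Abs {V A}. Arguments FVar {V A}. Arguments BVar {V A}.

Inductive dir : Type := DL | DD | DR .

(* A trace; the head of the list is the LAST step: (d :: tau) is d . tau. *)
Definition trace := list dir.

Section Graph.
Variables (V A : Type) (lab : V -> node V A).

Definition pre_lambda_graph : Prop :=
  (forall v w a, lab v = FVar a -> lab w = FVar a -> v = w) /\
  (forall v l, lab v = BVar l -> exists b, lab l = Abs b).

Inductive Path (n : V) : trace -> V -> Prop :=
| Path_nil : Path n [] n
| Path_abs : forall tau l m, Path n tau l -> lab l = Abs m -> Path n (DD :: tau) m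
| Path_left : forall tau l m1 m2, Path n tau l -> lab l = App m1 m2 -> Path n (DL :: tau) m1
| Path_right : forall tau l m1 m2, Path n tau l -> lab l = App m1 m2 -> Path n (DR :: tau) m2.

Fixpoint crosses (n : V) (tau : trace) (m : V) : Prop :=
  Path n tau m \/ match tau with [] => False | _ :: tau' => crosses n tau' m end.

Definition is_root (r : V) : Prop := forall n tau, Path n tau r -> tau = [].

Definition dominates (m n : V) : Prop :=
  forall r tau, is_root r -> Path r tau n -> crosses r tau m.

Definition finite_nodes : Prop := exists l : list V, forall v, In v l.

Definition acyclic : Prop := forall n tau, Path n tau n -> tau = [].

Definition dominated : Prop := forall v l, lab v = BVar l -> dominates l v.

Definition lambda_graph : Prop :=
  pre_lambda_graph /\ finite_nodes /\ acyclic /\ dominated.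

Definition homogeneous_nodes (n m : V) : Prop :=
  match lab n, lab m with
  | App _ _, App _ _ | Abs _, Abs _ | FVar _, FVar _ | BVar _, BVar _ => True
  | _, _ => False
  end.

Definition homogeneous (R : V -> V -> Prop) : Prop :=
  forall n m, R n m -> homogeneous_nodes n m.

Definition propagated (R : V -> V -> Prop) : Prop :=
  (forall n m n1 n2 m1 m2, R n m -> lab n = App n1 n2 -> lab m = App m1 m2 -> R n1 m1) /\
  (forall n m n1 n2 m1 m2, R n m -> lab n = App n1 n2 -> lab m = App m1 m2 -> R n2 m2) /\
  (forall n m n' m', R n m -> lab n = Abs n' -> lab m = Abs m' -> R n' m').

Definition closed_binders (R : V -> V -> Prop) : Prop :=
  forall n m l l', R n m -> lab n = BVar l -> lab m = BVar l' -> R l l'.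

Definition bisimulation (R : V -> V -> Prop) : Prop :=
  homogeneous R /\ propagated R /\ closed_binders R.

Inductive propagation (R : V -> V -> Prop) : V -> V -> Prop :=
| prop_base : forall n m, R n m -> propagation R n m
| prop_left : forall n m n1 n2 m1 m2, propagation R n m ->
    lab n = App n1 n2 -> lab m = App m1 m2 -> propagation R n1 m1
| prop_right : forall n m n1 n2 m1 m2, propagation R n m ->
    lab n = App n1 n2 -> lab m = App m1 m2 -> propagation R n2 m2
| prop_abs : forall n m n' m', propagation R n m ->
    lab n = Abs n' -> lab m = Abs m' -> propagation R n' m'.

Definition query (Q : V -> V -> Prop) : Prop :=
  forall n m, Q n m -> is_root n /\ is_root m.

End Graph.

(* Main.v *)
Require Import Defs.
From Stdlib Require Import List Lia.
Import ListNotations.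

Lemma path_concat {V A} (lab : V -> node V A) u v w t1 t2 :
  Path lab v t2 w -> Path lab u t1 v -> Path lab u (t2 ++ t1) w.
Proof.
  intros H2 H1; induction H2; simpl; auto.
  - eapply Path_abs; eauto.
  - eapply Path_left; eauto.
  - eapply Path_right; eauto.
Qed.

Lemma path_split {V A} (lab : V -> node V A) u t2 : forall t1 w,
  Path lab u (t2 ++ t1) w -> exists v, Path lab u t1 v /\ Path lab v t2 w.
Proof.
  induction t2 as [|d t2 IH]; simpl; intros t1 w H.
  - exists w; split; auto; constructor.
  - inversion H as [|? l0 ? Hp Hlab|? l0 ? ? Hp Hlab|? l0 ? ? Hp Hlab]; subst.
    + destruct (IH _ _ Hp) as [v [Hv1 Hv2]]. exists v; split; auto. eapply Path_abs; eauto.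
    + destruct (IH _ _ Hp) as [v [Hv1 Hv2]]. exists v; split; auto. eapply Path_left; eauto.
    + destruct (IH _ _ Hp) as [v [Hv1 Hv2]]. exists v; split; auto. eapply Path_right; eauto.
Qed.

Lemma crosses_split {V A} (lab : V -> node V A) r m t :
  crosses lab r t m -> exists d p, t = d ++ p /\ Path lab r p m.
Proof.
  induction t as [|x t IH]; simpl; intros [H|H].
  - exists [], []; auto.
  - contradiction.
  - exists [], (x :: t); auto.
  - destruct (IH H) as [d [p [-> Hp]]]. exists (x :: d), p; auto.
Qed.

Lemma app_suffix {X} (d1 : list X) : forall d2 p q, d1 ++ p = d2 ++ q ->
  (exists e, q = e ++ p) \/ (exists e, p = e ++ q).
Proof.
  induction d1 as [|a d1 IH]; intros d2 p q H; simpl in H.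
  - right; exists d2; auto.
  - destruct d2 as [|b d2]; simpl in H.
    + left; exists (a :: d1); auto.
    + injection H; intros; eauto.
Qed.

Lemma bisim_transfer {V A} (lab : V -> node V A) B u v t u' :
  bisimulation lab B -> B u v -> Path lab u t u' -> exists v', Path lab v t v' /\ B u' v'.
Proof.
  intros [Hh [[Hl [Hr Ha]] Hc]] Huv H; induction H.
  - exists v; split; auto; constructor.
  - destruct IHPath as [v' [Hp Hb]]. pose proof (Hh _ _ Hb) as Hk.
    unfold homogeneous_nodes in Hk; rewrite H0 in Hk.
    destruct (lab v') eqn:E; try contradiction.
    exists v0; split; [eapply Path_abs; eauto | eapply Ha; eauto].
  - destruct IHPath as [v' [Hp Hb]]. pose proof (Hh _ _ Hb) as Hk.
    unfold homogeneous_nodes in Hk; rewrite H0 in Hk.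
    destruct (lab v') eqn:E; try contradiction.
    exists v0; split; [eapply Path_left; eauto | eapply Hl; eauto].
  - destruct IHPath as [v' [Hp Hb]]. pose proof (Hh _ _ Hb) as Hk.
    unfold homogeneous_nodes in Hk; rewrite H0 in Hk.
    destruct (lab v') eqn:E; try contradiction.
    exists v1; split; [eapply Path_right; eauto | eapply Hr; eauto].
Qed.

Lemma bisim_transfer_rev {V A} (lab : V -> node V A) B u v t v' :
  bisimulation lab B -> B u v -> Path lab v t v' -> exists u', Path lab u t u' /\ B u' v'.
Proof.
  intros [Hh [[Hl [Hr Ha]] Hc]] Huv H; induction H.
  - exists u; split; auto; constructor.
  - destruct IHPath as [u' [Hp Hb]]. pose proof (Hh _ _ Hb) as Hk.
    unfold homogeneous_nodes in Hk; rewrite H0 in Hk.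
    destruct (lab u') eqn:E; try contradiction.
    exists v0; split; [eapply Path_abs; eauto | eapply Ha; eauto].
  - destruct IHPath as [u' [Hp Hb]]. pose proof (Hh _ _ Hb) as Hk.
    unfold homogeneous_nodes in Hk; rewrite H0 in Hk.
    destruct (lab u') eqn:E; try contradiction.
    exists v0; split; [eapply Path_left; eauto | eapply Hl; eauto].
  - destruct IHPath as [u' [Hp Hb]]. pose proof (Hh _ _ Hb) as Hk.
    unfold homogeneous_nodes in Hk; rewrite H0 in Hk.
    destruct (lab u') eqn:E; try contradiction.
    exists v1; split; [eapply Path_right; eauto | eapply Hr; eauto].
Qed.

Definition Tr {V A} (lab : V -> node V A) u t := exists w, Path lab u t w.
Definition EqT {V A} (lab : V -> node V A) u v := forall t, Tr lab u t <-> Tr lab v t.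

Lemma bisim_Eq {V A} (lab : V -> node V A) B u v :
  bisimulation lab B -> B u v -> EqT lab u v.
Proof.
  intros HB H t; split; intros [w Hw].
  - destruct (bisim_transfer lab B u v _ _ HB H Hw) as [x [Hx _]]; exists x; auto.
  - destruct (bisim_transfer_rev lab B u v _ _ HB H Hw) as [x [Hx _]]; exists x; auto.
Qed.

Lemma path_nodup {V A} (lab : V -> node V A) (Hac : acyclic lab) u t w :
  Path lab u t w -> exists vs, length vs = S (length t) /\ NoDup vs /\
    forall v, In v vs -> exists t2, Path lab v t2 w.
Proof.
  intro H; induction H.
  - exists [u]; repeat split; auto. repeat constructor; auto.
    intros v [<-|[]]; exists []; constructor.
  - destruct IHPath as [vs [Hl [Hn Hi]]]. exists (m :: vs); repeat split.
    + simpl; lia.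
    + constructor; auto. intro Hm. destruct (Hi _ Hm) as [t2 Ht2].
      assert (Path lab m (DD :: t2) m) by (eapply Path_abs; eauto). apply Hac in H1; discriminate.
    + intros v [<-|Hv]. exists []; constructor. destruct (Hi _ Hv) as [t2 Ht2].
      exists (DD :: t2); eapply Path_abs; eauto.
  - destruct IHPath as [vs [Hl [Hn Hi]]]. exists (m1 :: vs); repeat split.
    + simpl; lia.
    + constructor; auto. intro Hm. destruct (Hi _ Hm) as [t2 Ht2].
      assert (Path lab m1 (DL :: t2) m1) by (eapply Path_left; eauto). apply Hac in H1; discriminate.
    + intros v [<-|Hv]. exists []; constructor. destruct (Hi _ Hv) as [t2 Ht2].
      exists (DL :: t2); eapply Path_left; eauto.
  - destruct IHPath as [vs [Hl [Hn Hi]]]. exists (m2 :: vs); repeat split.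
    + simpl; lia.
    + constructor; auto. intro Hm. destruct (Hi _ Hm) as [t2 Ht2].
      assert (Path lab m2 (DR :: t2) m2) by (eapply Path_right; eauto). apply Hac in H1; discriminate.
    + intros v [<-|Hv]. exists []; constructor. destruct (Hi _ Hv) as [t2 Ht2].
      exists (DR :: t2); eapply Path_right; eauto.
Qed.

Lemma path_bound {V A} (lab : V -> node V A) (Hac : acyclic lab) (l : list V)
  (Hl : forall v, In v l) u t w : Path lab u t w -> length t < length l.
Proof.
  intro H. destruct (path_nodup _ Hac _ _ _ H) as [vs [Hlen [Hn _]]].
  assert (length vs <= length l) by (apply NoDup_incl_length; auto; intros x _; auto). lia.
Qed.

Fixpoint rep {X} (k : nat) (e : list X) : list X :=
  match k with 0 => [] | S k => rep k e ++ e end.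

Lemma pump {V A} (lab : V -> node V A) (Hac : acyclic lab) (Hfin : exists l : list V, forall v, In v l)
  x z e : EqT lab x z -> Path lab x e z -> e <> [] -> False.
Proof.
  intros HE Hp Hne. destruct Hfin as [l Hl].
  assert (Hk : forall k, Tr lab z (rep k e)).
  { induction k; simpl. exists z; constructor.
    destruct IHk as [w Hw]. apply HE. exists w. eapply path_concat; eauto. }
  destruct (Hk (length l)) as [w Hw].
  apply (path_bound _ Hac l Hl) in Hw.
  assert (forall k, k <= length (rep k e)).
  { induction k; simpl; auto. rewrite length_app. destruct e; [congruence|simpl; lia]. }
  specialize (H (length l)); lia.
Qed.

Lemma prop_char {V A} (lab : V -> node V A) Q n m :
  propagation lab Q n m -> exists r s t, Q r s /\ Path lab r t n /\ Path lab s t m.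
Proof.
  intro H; induction H.
  - exists n, m, []; repeat split; auto; constructor.
  - destruct IHpropagation as [r [s [t [Hq [K1 K2]]]]].
    exists r, s, (DL :: t); repeat split; auto; eapply Path_left; eauto.
  - destruct IHpropagation as [r [s [t [Hq [K1 K2]]]]].
    exists r, s, (DR :: t); repeat split; auto; eapply Path_right; eauto.
  - destruct IHpropagation as [r [s [t [Hq [K1 K2]]]]].
    exists r, s, (DD :: t); repeat split; auto; eapply Path_abs; eauto.
Qed.

Lemma prop_of_paths {V A} (lab : V -> node V A) Q r s t :
  Q r s -> forall n, Path lab r t n -> forall m, Path lab s t m -> propagation lab Q n m.
Proof.
  intro Hq; induction t as [|d t IH]; intros n Hn m Hm.
  - inversion Hn; inversion Hm; subst; constructor; auto.
  - inversion Hn; subst; inversion Hm; subst.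
    + eapply prop_abs; eauto.
    + eapply prop_left; eauto.
    + eapply prop_right; eauto.
Qed.

Lemma prop_sub {V A} (lab : V -> node V A) B Q :
  bisimulation lab B -> (forall n m, Q n m -> B n m) ->
  forall n m, propagation lab Q n m -> B n m.
Proof.
  intros [Hh [[Hl [Hr Ha]] Hc]] HQB n m H; induction H; eauto.
Qed.

Theorem mainTheorem9 (V A : Type) (lab : V -> node V A)
  (HG : lambda_graph lab)
  (B Q : V -> V -> Prop)
  (HB : bisimulation lab B)
  (HQ : query lab Q)
  (HQB : forall n m, Q n m -> B n m) :
  bisimulation lab (propagation lab Q).
Proof.
  destruct HG as [Hpre [Hfin [Hac Hdom]]].
  pose proof (prop_sub _ _ _ HB HQB) as Hsub.
  split; [|split; [split; [|split]|]].
  - intros n m H. apply (proj1 HB). auto.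
  - intros. eapply prop_left; eauto.
  - intros. eapply prop_right; eauto.
  - intros. eapply prop_abs; eauto.
  - intros n m l l' H Hn Hm.
    pose proof (Hsub _ _ H) as Bnm.
    pose proof (proj2 (proj2 HB) _ _ _ _ Bnm Hn Hm) as Bll.
    destruct (prop_char _ _ _ _ H) as [r [s [t [Hq [Hr Hs]]]]].
    destruct (HQ _ _ Hq) as [Rr Rs].
    destruct (crosses_split _ _ _ _ (Hdom _ _ Hn _ _ Rr Hr)) as [d1 [p [Et Hp]]].
    destruct (crosses_split _ _ _ _ (Hdom _ _ Hm _ _ Rs Hs)) as [d2 [q [Et' Hq']]].
    rewrite Et in Et'.
    destruct (app_suffix _ _ _ _ Et') as [[e ->]|[e ->]].
    + destruct e as [|x e].
      * eapply prop_of_paths; eauto.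
      * exfalso. destruct (path_split _ _ _ _ _ Hq') as [y [Hy1 Hy2]].
        pose proof (Hsub _ _ (prop_of_paths _ _ _ _ _ Hq _ Hp _ Hy1)) as Bly.
        apply (pump _ Hac Hfin y l' (x :: e)); auto; try discriminate.
        intro t0. rewrite <- (bisim_Eq _ _ _ _ HB Bly t0).
        apply (bisim_Eq _ _ _ _ HB Bll t0).
    + destruct e as [|x e].
      * eapply prop_of_paths; eauto.
      * exfalso. destruct (path_split _ _ _ _ _ Hp) as [y [Hy1 Hy2]].
        pose proof (Hsub _ _ (prop_of_paths _ _ _ _ _ Hq _ Hy1 _ Hq')) as Byl.
        apply (pump _ Hac Hfin y l (x :: e)); auto; try discriminate.
        intro t0. rewrite (bisim_Eq _ _ _ _ HB Byl t0).
        symmetry; apply (bisim_Eq _ _ _ _ HB Bll t0).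
Qed.
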